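(* Let $q=2^m$, let $k\in\mathbb{F}_q$ with $Tr(k)=1$, let $i\in\mathbb{F}_{q^2}\setminus\mathbb{F}_q$ with $i^2=i+k$, and let $\alpha=A+iB$, $\beta=C+iD$ with $A,B,C,D\in\mathbb{F}_q$ and $\alpha\beta\neq 0$. Then the following are equivalent: (i) $A=\frac{BC+BD+B}{D}$ with $D\neq 0$, $BD(B+D)\neq 0$, $kD^2+C^2+CD+1=0$, and $Tr\left(1+\frac{D}{B^2}\right)=0$; (ii) $\beta=\alpha^{q-1}\in\mathbb{F}_{q^2}\setminus\mathbb{F}_q$, $Tr\left(1+\frac{1}{\alpha^{q+1}}\right)=0$, and $\alpha+\alpha^q\neq\beta+\beta^q$.
   Context: $Tr:\mathbb{F}_q\to\mathbb{F}_2$ is the absolute trace $Tr(z)=z+z^2+\cdots+z^{2^{m-1}}$. *)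

(* Defs.v *)
From HB Require Import structures.
From mathcomp Require Import all_boot all_order all_algebra all_field.
Set Implicit Arguments. Unset Strict Implicit. Unset Printing Implicit Defensive.
Import GRing.Theory.
Local Open Scope ring_scope.

(* F_{q^2} is modelled as a finite field L with #|L| = q^2, q = 2^m;
   F_q is its unique subfield of order q, i.e. {x | x^q = x}. *)

Definition In_Fq (L : finFieldType) (m : nat) (x : L) : Prop := x ^+ (2 ^ m)%N = x.

Definition Tr (L : finFieldType) (m : nat) (z : L) : L :=
  \sum_(j < m) z ^+ (2 ^ j)%N.

(* Main.v *)
Require Import Defs.
From mathcomp Require Import all_boot all_order all_algebra all_field.
From mathcomp Require Import ring.
Import GRing.Theory.
Local Open Scope ring_scope.

Theorem proposition5 (L : finFieldType) (m : nat)
  (HL : #|L| = ((2 ^ m) ^ 2)%N)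
  (k i A B C D : L)
  (Hk : In_Fq m k) (HTk : Tr m k = 1)
  (Hi : ~ In_Fq m i) (Hi2 : i ^+ 2 = i + k)
  (HA : In_Fq m A) (HB : In_Fq m B) (HC : In_Fq m C) (HD : In_Fq m D)
  (Hab : (A + i * B) * (C + i * D) != 0) :
  let q := (2 ^ m)%N in
  let alpha := A + i * B in
  let beta := C + i * D in
  (A = (B * C + B * D + B) / D /\ D != 0 /\ B * D * (B + D) != 0 /\
   k * D ^+ 2 + C ^+ 2 + C * D + 1 = 0 /\ Tr m (1 + D / B ^+ 2) = 0)
  <->
  (beta = alpha ^+ (q - 1) /\ ~ In_Fq m beta /\
   Tr m (1 + 1 / alpha ^+ (q + 1)) = 0 /\
   alpha + alpha ^+ q != beta + beta ^+ q).
Proof.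
move=> q alpha beta.
have ch2 : (2 \in [pchar L])%N.
  apply: (@card_finPcharP _ 2 (m * 2)) => //; by rewrite HL expnM.
have two0 : (2%:R : L) = 0 by move: ch2 => /andP [_ /eqP].
have eq2 : forall a b : L, a + b = 0 -> a = b.
  by move=> a b /eqP; rewrite addr_eq0 (oppr_pchar2 ch2) => /eqP.
have q0 : (0 < q)%N by rewrite expn_gt0.
have frobD : forall x y : L, (x + y) ^+ q = x ^+ q + y ^+ q.
  rewrite /q; elim: (m) => [|n IH] x y; first by rewrite !expr1.
  rewrite expnSr !exprM IH sqrrD -mulr_natr two0 mulr0 addr0 //.
have frobM : forall x y : L, (x * y) ^+ q = x ^+ q * y ^+ q by move=> x y; rewrite exprMn.
have iq : i ^+ q = i + 1.
  have h : (i ^+ q) ^+ 2 = i ^+ q + k by rewrite -exprM mulnC exprM Hi2 frobD Hk.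
  have : (i ^+ q - i) * (i ^+ q + i + 1) = 0.
    have -> : (i ^+ q - i) * (i ^+ q + i + 1) =
      ((i ^+ q) ^+ 2 - (i ^+ q + k)) - (i ^+ 2 - (i + k)) + (i ^+ q - i) * 2%:R by ring.
    by rewrite h Hi2 !subrr two0 mulr0 addr0.
  move/eqP; rewrite mulf_eq0 => /orP [/eqP h1|/eqP h1].
    by exfalso; apply: Hi; apply/eqP; rewrite -subr_eq0 h1.
  by apply: eq2; rewrite addrA.
have conj : forall a b : L, In_Fq m a -> In_Fq m b -> (a + i * b) ^+ q = (a + b) + i * b.
  move=> a b ha hb; rewrite frobD frobM ha hb iq; ring.
have alpha0 : alpha != 0 by move: Hab; rewrite mulf_eq0 negb_or => /andP [].
have alphaq : alpha ^+ q = (A + B) + i * B by rewrite conj.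
have betaq : beta ^+ q = beta + D by rewrite /beta conj //; ring.
have Hq1 : alpha ^+ (q - 1) * alpha = alpha ^+ q by rewrite -exprSr subn1 prednK.
have Fq_add : forall x y : L, In_Fq m x -> In_Fq m y -> In_Fq m (x + y).
  by move=> x y hx hy; change ((x + y) ^+ q = x + y); rewrite frobD hx hy.
have Fq_mul : forall x y : L, In_Fq m x -> In_Fq m y -> In_Fq m (x * y).
  by move=> x y hx hy; change ((x * y) ^+ q = x * y); rewrite frobM hx hy.
set X1 := C * A + k * D * B + A + B.
set X2 := C * B + D * A + D * B + B.
have dec : beta * alpha + alpha ^+ q = X1 + i * X2.
  rewrite alphaq.
  have -> : beta * alpha + (A + B + i * B) = X1 + i * X2 + (i ^+ 2 - (i + k)) * D * B
    by rewrite /X1 /X2 /beta /alpha; ring.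
  by rewrite Hi2 subrr !mul0r addr0.
have X1F : In_Fq m X1.
  rewrite /X1; by repeat first [assumption | apply Fq_add | apply Fq_mul].
have X2F : In_Fq m X2.
  rewrite /X2; by repeat first [assumption | apply Fq_add | apply Fq_mul].
have Nal : alpha ^+ (q + 1) = A ^+ 2 + A * B + k * B ^+ 2.
  rewrite addn1 exprSr alphaq /alpha.
  have -> : (A + B + i * B) * (A + i * B) = A ^+ 2 + A * B + k * B ^+ 2
     + (i ^+ 2 - (i + k)) * B ^+ 2 + (A * B * i + i * B ^+ 2) * 2%:R by ring.
  by rewrite Hi2 subrr two0 !mul0r mulr0 !addr0.
have key : A * D = B * C + B * D + B -> k * D ^+ 2 + C ^+ 2 + C * D + 1 = 0 ->
   D != 0 -> B != 0 -> 1 / alpha ^+ (q + 1) = D / B ^+ 2.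
  move=> hAD hK hD0 hB0.
  have hN : (A ^+ 2 + A * B + k * B ^+ 2) * D ^+ 2 = B ^+ 2 * D.
    have -> : (A ^+ 2 + A * B + k * B ^+ 2) * D ^+ 2 =
      (A * D - (B * C + B * D + B)) * (A * D + (B * C + B * D + B) + B * D)
      + B ^+ 2 * (k * D ^+ 2 + C ^+ 2 + C * D + 1) + B ^+ 2 * D
      + B ^+ 2 * (C * D + C + D + D ^+ 2 ) * 2%:R by ring.
    by rewrite hAD subrr hK two0 !mul0r !mulr0 !add0r !addr0.
  rewrite Nal; apply/eqP; rewrite eq_sym -subr_eq0.
  have hN0 : A ^+ 2 + A * B + k * B ^+ 2 != 0.
    apply/negP => /eqP h0; move: hN; rewrite h0 mul0r => /esym/eqP.
    by rewrite mulf_eq0 expf_eq0 /= (negbTE hB0) (negbTE hD0).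
  have -> : D / B ^+ 2 - 1 / (A ^+ 2 + A * B + k * B ^+ 2) =
     ((A ^+ 2 + A * B + k * B ^+ 2) * D ^+ 2 - B ^+ 2 * D) /
     (B ^+ 2 * D * (A ^+ 2 + A * B + k * B ^+ 2)).
    by field; rewrite hN0 hB0 hD0.
  by rewrite hN subrr mul0r.
have X1rel : D * X1 = (C + 1) * (A * D - (B * C + B * D + B))
     + B * (k * D ^+ 2 + C ^+ 2 + C * D + 1) + (B * D + B * C) * 2%:R.
  rewrite /X1; ring.
have X2rel : X2 = (A * D - (B * C + B * D + B)) + (C * B + D * B + B) * 2%:R.
  rewrite /X2; ring.
split.
- move=> [hA [hD0 [hBD [hK hT]]]].
  have hB0 : B != 0 by move: hBD; rewrite !mulf_eq0 negb_or => /andP [/norP [] ].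
  have hAD : A * D = B * C + B * D + B by rewrite hA mulfVK.
  have hX2 : X2 = 0 by rewrite X2rel hAD subrr two0 mulr0 addr0.
  have hX1 : X1 = 0.
    apply/eqP; move: X1rel; rewrite hAD subrr hK two0 !mulr0 !addr0 => /eqP.
    by rewrite mulf_eq0 (negbTE hD0).
  have hba : beta * alpha = alpha ^+ q by apply: eq2; rewrite dec hX1 hX2 mulr0 addr0.
  split; first by apply: (mulIf alpha0); rewrite Hq1.
  split; first by rewrite /In_Fq betaq => /(congr1 (fun z => z - beta)) /=; rewrite (addrC beta D) addrK subrr => /eqP; rewrite (negbTE hD0).
  split; first by rewrite key.
  rewrite alphaq betaq.
  have -> : alpha + (A + B + i * B) = B + alpha * 2%:R by rewrite /alpha; ring.
  have -> : beta + (beta + D) = D + beta * 2%:R by ring.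
  rewrite two0 !mulr0 !addr0; apply/eqP => hBD'.
  by move: hBD; rewrite hBD' (addrr_pchar2 ch2) mulr0 eqxx.
- move=> [hbeta [hnF [hT hne]]].
  have hba : beta * alpha = alpha ^+ q by rewrite hbeta Hq1.
  have h0 : X1 + i * X2 = 0 by rewrite -dec hba (addrr_pchar2 ch2).
  have h1 : X1 + (i + 1) * X2 = 0.
    by rewrite -[X in X + _ ]X1F -[X in _ * X]X2F -iq -frobM -frobD h0 expr0n /= eqn0Ngt q0.
  have hX2 : X2 = 0.
    have -> : X2 = (X1 + (i + 1) * X2) - (X1 + i * X2) by ring.
    by rewrite h0 h1 subrr.
  have hX1 : X1 = 0 by move: h0; rewrite hX2 mulr0 addr0.
  have hD0 : D != 0.
    apply/negP => /eqP hD0; apply: hnF; rewrite /beta hD0 mulr0 addr0; exact: HC.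
  have hAD : A * D = B * C + B * D + B.
    by apply/eqP; rewrite -subr_eq0; apply/eqP; move: X2rel; rewrite hX2 two0 mulr0 addr0.
  have hB0 : B != 0.
    apply/negP => /eqP hB0; move: alpha0; rewrite /alpha hB0 mulr0 addr0 => hA0.
    by move: hAD; rewrite hB0 !mul0r !addr0 => /eqP; rewrite mulf_eq0 (negbTE hA0) (negbTE hD0).
  have hK : k * D ^+ 2 + C ^+ 2 + C * D + 1 = 0.
    apply/eqP; move: X1rel; rewrite hX1 hAD subrr two0 !mulr0 !add0r !addr0 => /esym/eqP.
    by rewrite mulf_eq0 (negbTE hB0).
  have hBD : B != D.
    apply/negP => /eqP hBD; move: hne; rewrite alphaq betaq.
    have -> : alpha + (A + B + i * B) = B + alpha * 2%:R by rewrite /alpha; ring.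
    have -> : beta + (beta + D) = D + beta * 2%:R by ring.
    by rewrite two0 !mulr0 !addr0 hBD eqxx.
  split; first by apply: (canRL (mulfK hD0)).
  split => //.
  split.
    rewrite !mulf_eq0 !negb_or hB0 hD0 /=; apply/negP => /eqP h.
    by move/negP: hBD; apply; apply/eqP; apply: eq2.
  split => //.
  by rewrite -(key hAD hK hD0 hB0).
Qed.
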